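(* Let $k$ be an odd positive integer and $m$ a positive integer. Then: (1) every integer of the form $p_1^{2^{m+1}k-1}$ with $p_1$ prime is $2^mk$-$T_0T^\ast$-perfect; (2) if $k>1$ and there exist integers $d_1,\dots,d_{m+2}>1$ with $d_1\cdots d_{m+2}=k$ (a multiplicative partition of $k$) such that $d_i\equiv 1\pmod{2^{m+1}}$ for all $i$, then every integer of the form $p_1^{(d_1-1)/2^{m+1}}\cdots p_{m+2}^{(d_{m+2}-1)/2^{m+1}}$ with distinct primes $p_1,\dots,p_{m+2}$ is $2^mk$-$T_0T^\ast$-perfect; (3) every $2^mk$-$T_0T^\ast$-perfect number $n>1$ is either of the form $p_1^{2^{m+1}k-1}$ with $p_1$ prime, or of the form $p_1^{(d_1-1)/2^{m+1}}\cdots p_{m+2}^{(d_{m+2}-1)/2^{m+1}}$ with distinct primes $p_i$ and integers $d_1,\dots,d_{m+2}>1$ as in (2).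
   Context: For a positive integer $m'$, $T(m')$ denotes the product of all positive divisors of $m'$, and $T^\ast(m')$ the product of all unitary divisors of $m'$ (divisors $d$ with $\gcd(d,m'/d)=1$). For an integer $K\ge 2$, an integer $n>1$ is called $K$-$T_0T^\ast$-perfect if $T(T^\ast(n))=n^K$. A multiplicative partition of an integer $N>1$ is an unordered factorization of $N$ as a product of integers in $\{1,\dots,N\}$. *)

(* Defs.v *)
From mathcomp Require Import all_boot.
Set Implicit Arguments. Unset Strict Implicit. Unset Printing Implicit Defensive.

Definition Tdiv (m : nat) : nat := \prod_(d <- divisors m) d.

Definition Tstar (m : nat) : nat :=
  \prod_(d <- divisors m | coprime d (m %/ d)) d.

Definition KT0Tstar_perfect (K n : nat) : Prop :=
  2 <= K /\ 1 < n /\ Tdiv (Tstar n) = n ^ K.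

(* Main.v *)
Require Import Defs.
From mathcomp Require Import all_boot.
Set Implicit Arguments. Unset Strict Implicit. Unset Printing Implicit Defensive.

Lemma prod_const_seq (T : Type) (s : seq T) n : \prod_(x <- s) n = n ^ size s.
Proof. by elim: s => [|x s IH]; rewrite ?big_nil ?big_cons ?IH ?expnS. Qed.

Lemma divnKK n d : 0 < n -> d %| n -> n %/ (n %/ d) = d.
Proof.
move=> n0 dn; have d0 : 0 < d by apply: dvdn_gt0 dn.
by rewrite divnA // mulKn.
Qed.

Lemma div_dvd n d : d %| n -> n %/ d %| n.
Proof. by move=> dn; rewrite -{2}(divnK dn) dvdn_mulr. Qed.

Lemma prod_pair n (Q : pred nat) : 0 < n ->
  (forall d, d %| n -> Q d = Q (n %/ d)) ->
  (\prod_(d <- divisors n | Q d) d) ^ 2 = n ^ count Q (divisors n).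
Proof.
move=> n0 HQ.
rewrite -big_filter -size_filter.
set s := filter Q (divisors n).
have ms x : (x \in s) = Q x && (x %| n) by rewrite mem_filter -dvdn_divisors.
have P : perm_eq s (map (fun d => n %/ d) s).
  apply: uniq_perm; first by rewrite filter_uniq // divisors_uniq.
    rewrite map_inj_in_uniq; first by rewrite filter_uniq // divisors_uniq.
    move=> x y; rewrite !ms => /andP[_ xn] /andP[_ yn] e.
    by rewrite -(divnKK n0 xn) e divnKK.
  move=> x; apply/idP/mapP.
    rewrite ms => /andP[Qx xn]; exists (n %/ x); last by rewrite divnKK.
    by rewrite ms div_dvd // andbT -HQ.
  case=> d; rewrite ms => /andP[Qd dn] ->.
  by rewrite ms div_dvd // andbT -HQ.
rewrite expnS expn1 {2}(perm_big _ P) big_map -big_split /=.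
rewrite (eq_big_seq (fun _ => n)) ?prod_const_seq //.
move=> x; rewrite ms => /andP[_ xn]; by rewrite mulnC divnK.
Qed.

Definition unit_pred (n : nat) : pred nat := fun d => coprime d (n %/ d).
Definition tau n := size (divisors n).
Definition ucnt n := count (unit_pred n) (divisors n).

Lemma gcd_split a b d : coprime a b -> d %| a * b -> d = gcdn d a * gcdn d b.
Proof.
move=> cab dab; apply/eqP; rewrite eqn_dvd; apply/andP; split.
  by rewrite muln_gcdl !muln_gcdr !dvdn_gcd dab !(dvdn_mulr _ (dvdnn d)) (dvdn_mull _ (dvdnn d)).
rewrite Gauss_dvd ?dvdn_gcdl //.
by apply: (coprime_dvdl (dvdn_gcdr _ _)); apply: (coprime_dvdr (dvdn_gcdr _ _)).
Qed.

Lemma divisors_mul a b : 0 < a -> 0 < b -> coprime a b ->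
  perm_eq (divisors (a * b)) [seq x * y | x <- divisors a, y <- divisors b].
Proof.
move=> a0 b0 cab; have ab0 : 0 < a * b by rewrite muln_gt0 a0.
apply: uniq_perm; first exact: divisors_uniq.
  apply: allpairs_uniq; rewrite ?divisors_uniq //.
  move=> [x1 y1] [x2 y2] /allpairsP[[u1 v1] /= [h1 h2 [-> ->]]].
  move=> /allpairsP[[u2 v2] /= [h3 h4 [-> ->]]] /= e.
  move: h1 h2 h3 h4; rewrite -!dvdn_divisors // => h1 h2 h3 h4.
  have key : forall x y, x %| a -> y %| b -> gcdn a (x * y) = x.
    move=> x y xa yb; rewrite mulnC Gauss_gcdr; first exact/gcdn_idPr.
    exact: coprime_dvdr yb cab.
  have ex : u1 = u2 by rewrite -(key u1 v1) // e key.
  have ey : v1 = v2.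
    have u10 : 0 < u1 by apply: dvdn_gt0 h1.
    by apply/eqP; rewrite -(eqn_pmul2l u10) e ex.
  by rewrite ex ey.
move=> d; rewrite -dvdn_divisors //; apply/idP/allpairsP.
  move=> dab; exists (gcdn d a, gcdn d b); rewrite /= -!dvdn_divisors //.
  by rewrite !dvdn_gcdr -gcd_split.
case=> [[x y] /= [xa yb ->]]; move: xa yb; rewrite -!dvdn_divisors // => xa yb.
exact: dvdn_mul.
Qed.

Lemma tau_mul a b : 0 < a -> 0 < b -> coprime a b -> tau (a * b) = tau a * tau b.
Proof.
by move=> a0 b0 cab; rewrite /tau (perm_size (divisors_mul a0 b0 cab)) size_allpairs.
Qed.

Lemma unit_mul a b x y : 0 < a -> 0 < b -> coprime a b -> x %| a -> y %| b ->
  unit_pred (a * b) (x * y) = unit_pred a x && unit_pred b y.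
Proof.
move=> a0 b0 cab xa yb; rewrite /unit_pred.
have x0 : 0 < x by apply: dvdn_gt0 xa.
have y0 : 0 < y by apply: dvdn_gt0 yb.
have -> : a * b %/ (x * y) = (a %/ x) * (b %/ y).
  rewrite -{1}(divnK xa) -{1}(divnK yb) mulnACA mulnK // muln_gt0 x0 //.
rewrite coprimeMl !coprimeMr.
have -> : coprime x (b %/ y).
  by apply: (coprime_dvdl xa); apply: (coprime_dvdr (div_dvd yb)).
have -> : coprime y (a %/ x).
  by apply: (coprime_dvdl yb); apply: (coprime_dvdr (div_dvd xa)); rewrite coprime_sym.
by rewrite andbT.
Qed.

Lemma ucnt_mul a b : 0 < a -> 0 < b -> coprime a b -> ucnt (a * b) = ucnt a * ucnt b.
Proof.
move=> a0 b0 cab; rewrite /ucnt ((permP (divisors_mul a0 b0 cab)) (unit_pred (a*b))).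
rewrite -!sum1_count big_mkcond big_allpairs_dep /= big_distrl /= [RHS]big_mkcond /=.
apply: eq_big_seq => x; rewrite -dvdn_divisors // => xa.
case Px: (unit_pred a x).
  rewrite mul1n [RHS]big_mkcond /=; apply: eq_big_seq => y; rewrite -dvdn_divisors // => yb.
  by rewrite unit_mul // Px.
apply: big1_seq => y; rewrite -dvdn_divisors // => yb.
by rewrite unit_mul // Px.
Qed.

Lemma divisors_pexp p e : prime p ->
  perm_eq (divisors (p ^ e)) (map (expn p) (iota 0 e.+1)).
Proof.
move=> pp; have pe0 : 0 < p ^ e by rewrite expn_gt0 prime_gt0.
apply: uniq_perm; first exact: divisors_uniq.
  by rewrite (map_inj_uniq (expnI (prime_gt1 pp))) iota_uniq.
move=> d; rewrite -dvdn_divisors //; apply/(dvdn_pfactor d e pp)/mapP.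
  by case=> i ie ->; exists i; rewrite // mem_iota add0n ltnS.
by case=> i; rewrite mem_iota add0n ltnS => ie ->; exists i.
Qed.

Lemma tau_pexp p e : prime p -> tau (p ^ e) = e.+1.
Proof. by move=> pp; rewrite /tau (perm_size (divisors_pexp e pp)) size_map size_iota. Qed.

Lemma ucnt_pexp p e : prime p -> 0 < e -> ucnt (p ^ e) = 2.
Proof.
move=> pp e0; rewrite /ucnt ((permP (divisors_pexp e pp)) (unit_pred _)) count_map.
have p0 := prime_gt0 pp.
rewrite (@eq_in_count _ _ (fun i => (i == 0) || (i == e))); last first.
  move=> i; rewrite mem_iota add0n ltnS => ie /=.
  rewrite /unit_pred -expnB //.
  case: i ie => [|i] ie /=; first by rewrite coprime1n.
  rewrite coprime_pexpl //.
  case: (ltngtP i.+1 e) ie => //= lt _.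
    by rewrite prime_coprime // dvdn_exp ?subn_gt0 // dvdnn.
  by rewrite -lt subnn coprimen1.
rewrite -add1n iotaD /= add0n.
rewrite (@eq_in_count _ _ (pred1 e)); last first.
  by move=> i; rewrite mem_iota /= => /andP[i1 _]; rewrite -[i == 0]/(i == 0) (gtn_eqF i1).
by rewrite count_uniq_mem ?iota_uniq // mem_iota e0 add1n ltnSn.
Qed.

Lemma prod_gt0 (I : eqType) (r : seq I) (F : I -> nat) :
  (forall i, i \in r -> 0 < F i) -> 0 < \prod_(i <- r) F i.
Proof.
move=> H; rewrite big_seq_cond; apply: (big_ind (fun x => 0 < x)) => //.
  by move=> x y x0 y0; rewrite muln_gt0 x0.
by move=> i /andP[ir _]; apply: H.
Qed.

Lemma mult_prod (f : nat -> nat)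
  (fmul : forall a b, 0 < a -> 0 < b -> coprime a b -> f (a * b) = f a * f b)
  (f1 : f 1 = 1) (I : eqType) (r : seq I) (p e : I -> nat) :
  uniq (map p r) -> (forall i, i \in r -> prime (p i)) ->
  f (\prod_(i <- r) p i ^ e i) = \prod_(i <- r) f (p i ^ e i).
Proof.
elim: r => [|i r IH]; first by rewrite !big_nil.
rewrite /= => /andP[ni ur] pr.
have pi : prime (p i) by apply: pr; rewrite mem_head.
have pr' : forall j, j \in r -> prime (p j) by move=> j jr; apply: pr; rewrite inE jr orbT.
rewrite !big_cons fmul ?IH //; first by rewrite expn_gt0 prime_gt0.
  by apply: prod_gt0 => j jr; rewrite expn_gt0 prime_gt0 ?pr'.
apply: coprimeXl; elim: r ni pr' {ur IH pr} => [|j r IH]; first by rewrite big_nil coprimen1.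
rewrite /= inE negb_or big_cons => /andP[nij nir] pr'.
rewrite coprimeMr IH // ?andbT.
  apply: coprimeXr; rewrite prime_coprime // dvdn_prime2 // ?eq_sym //.
  by apply: pr'; rewrite mem_head.
by move=> k kr; apply: pr'; rewrite inE kr orbT.
Qed.

Lemma logn_prod (I : eqType) (r : seq I) (p e : I -> nat) q :
  (forall i, i \in r -> prime (p i)) -> prime q ->
  logn q (\prod_(i <- r) p i ^ e i) = \sum_(i <- r | p i == q) e i.
Proof.
move=> pr pq; elim: r pr => [|i r IH] pr; first by rewrite !big_nil logn1.
have pi : prime (p i) by apply: pr; rewrite mem_head.
rewrite !big_cons lognM; first last.
- by apply: prod_gt0 => j jr; rewrite expn_gt0 prime_gt0 // pr // inE jr orbT.
- by rewrite expn_gt0 prime_gt0.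
rewrite IH; last by move=> j jr; apply: pr; rewrite inE jr orbT.
rewrite lognX logn_prime // eq_sym; case: (p i == q) => //=.
by rewrite muln1.
by rewrite muln0.
Qed.

Lemma prod_primes n : 0 < n -> n = \prod_(q <- primes n) q ^ logn q n.
Proof. by move=> n0; rewrite {1}(prod_prime_decomp n0) prime_decompE big_map. Qed.

Lemma mult_primes (f : nat -> nat)
  (fmul : forall a b, 0 < a -> 0 < b -> coprime a b -> f (a * b) = f a * f b)
  (f1 : f 1 = 1) n : 0 < n -> f n = \prod_(q <- primes n) f (q ^ logn q n).
Proof.
move=> n0; rewrite {1}(prod_primes n0) (mult_prod fmul f1) ?map_id ?primes_uniq //.
by move=> q; rewrite mem_primes => /andP[].
Qed.

Lemma tau_primes n : 0 < n -> tau n = \prod_(q <- primes n) (logn q n).+1.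
Proof.
move=> n0; rewrite (mult_primes tau_mul) //; apply: eq_big_seq => q.
by rewrite mem_primes => /andP[pq _]; rewrite tau_pexp.
Qed.

Lemma ucnt_primes n : 0 < n -> ucnt n = 2 ^ size (primes n).
Proof.
move=> n0; rewrite (mult_primes ucnt_mul) // -prod_const_seq; apply: eq_big_seq => q qn.
have pq : prime q by move: qn; rewrite mem_primes => /andP[].
by rewrite ucnt_pexp // logn_gt0.
Qed.

Lemma Tdiv_sq N : 0 < N -> Tdiv N ^ 2 = N ^ tau N.
Proof.
move=> N0; have := @prod_pair N predT N0 (fun _ _ => erefl).
by rewrite count_predT.
Qed.

Lemma Tstar_sq n : 0 < n -> Tstar n ^ 2 = n ^ ucnt n.
Proof.
move=> n0; apply: (@prod_pair n (unit_pred n) n0) => d dn.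
by rewrite /unit_pred divnKK // coprime_sym.
Qed.

Lemma primes_size_gt0 n : 1 < n -> 0 < size (primes n).
Proof. by move=> n1; rewrite lt0n size_eq0 primes_eq0 -leqNgt. Qed.

Definition cc n := 2 ^ (size (primes n)).-1.

Lemma Tstar_eq n : 1 < n -> Tstar n = n ^ cc n.
Proof.
move=> n1; have n0 : 0 < n by apply: ltnW.
apply/eqP; rewrite -(@eqn_exp2r _ _ 2) // Tstar_sq // ucnt_primes // -expnM.
rewrite /cc -expnSr prednK ?primes_size_gt0 //.
Qed.

Definition EE n := cc n * \prod_(q <- primes n) (cc n * logn q n).+1.

Lemma TT_sq n : 1 < n -> Tdiv (Tstar n) ^ 2 = n ^ EE n.
Proof.
move=> n1; have n0 : 0 < n by apply: ltnW.
have c0 : 0 < cc n by rewrite expn_gt0.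
rewrite Tstar_eq // Tdiv_sq ?expn_gt0 ?n0 // tau_primes ?expn_gt0 ?n0 //.
rewrite -expnM /EE primesX //; congr (n ^ (_ * _)).
by apply: eq_bigr => q _; rewrite lognX.
Qed.

Lemma perfect_iff K n : 1 < n ->
  KT0Tstar_perfect K n <-> (2 <= K /\ EE n = K * 2).
Proof.
move=> n1; rewrite /KT0Tstar_perfect; split.
  case=> K2 [_ e]; split => //; apply/eqP; rewrite -(eqn_exp2l _ _ n1) -TT_sq // e expnM //.
case=> K2 e; split => //; split => //; apply/eqP.
by rewrite -(@eqn_exp2r _ _ 2) // -expnM -e TT_sq.
Qed.

Lemma size_ie n : size (index_enum 'I_n) = n.
Proof. by rewrite [index_enum _]unlock -enumT size_enum_ord. Qed.

Section Gen.
Variables (I : eqType) (r : seq I) (p e : I -> nat).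
Hypotheses (ur : uniq r) (pinj : injective p) (pr : forall i, prime (p i))
  (e0 : forall i, 0 < e i).
Let n := \prod_(i <- r) p i ^ e i.

Lemma gen_n0 : 0 < n.
Proof. by apply: prod_gt0 => i _; rewrite expn_gt0 prime_gt0. Qed.

Lemma gen_logn j : j \in r -> logn (p j) n = e j.
Proof.
move=> jr; rewrite /n logn_prod //.
rewrite (eq_bigl (pred1 j)); last by move=> i; rewrite /= inj_eq.
by rewrite -big_filter filter_pred1_uniq // big_seq1.
Qed.

Lemma gen_primes : perm_eq (primes n) (map p r).
Proof.
apply: uniq_perm; rewrite ?primes_uniq ?map_inj_uniq //.
move=> q; case pq: (prime q); last first.
  rewrite mem_primes pq /=; apply/esym/negbTE/mapP => -[i _ qi].
  by move: pq; rewrite qi pr.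
rewrite -logn_gt0; case qm: (q \in map p r).
  by case/mapP: qm => j jr ->; rewrite gen_logn // e0.
rewrite /n logn_prod // big1_seq //= => i /andP[/eqP piq ir].
by move: qm; rewrite -piq map_f.
Qed.

Lemma gen_EE : EE n = 2 ^ (size r).-1 * \prod_(i <- r) (2 ^ (size r).-1 * e i).+1.
Proof.
have P := gen_primes.
have sz : size (primes n) = size r by rewrite (perm_size P) size_map.
rewrite /EE /cc sz (perm_big _ P) big_map; congr (_ * _).
by apply: eq_big_seq => i ir; rewrite gen_logn.
Qed.
End Gen.

Lemma odd_prod (I : Type) (r : seq I) (F : I -> nat) :
  (forall i, odd (F i)) -> odd (\prod_(i <- r) F i).
Proof. by move=> H; apply: (big_ind (fun x => odd x)) => // x y; rewrite oddM => ->. Qed.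

Lemma logn2_odd a x : odd x -> logn 2 (2 ^ a * x) = a.
Proof.
move=> ox; have x0 : 0 < x by case: x ox.
rewrite lognM ?expn_gt0 // pfactorK // logn_coprime ?addn0 //.
by rewrite coprime2n.
Qed.

Lemma K2 k m : odd k -> 0 < m -> 2 <= 2 ^ m * k.
Proof.
move=> hk hm; have k0 : 0 < k by move: hk; case: (k).
apply: (leq_trans (_ : 2 <= 2 ^ m)); last by rewrite leq_pmulr.
by rewrite -{1}(expn1 2) leq_exp2l.
Qed.

Theorem part1 (k m : nat) (hk : odd k) (hm : 0 < m) p1 : prime p1 ->
     KT0Tstar_perfect (2 ^ m * k) (p1 ^ (2 ^ m.+1 * k - 1)).
Proof.
move=> pp; have k0 : 0 < k by move: hk; case: (k).
have x0 : 0 < 2 ^ m.+1 * k by rewrite muln_gt0 expn_gt0.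
set a := 2 ^ m.+1 * k - 1.
have aS : a.+1 = 2 ^ m.+1 * k by rewrite /a subn1 prednK.
have a0 : 0 < a.
  rewrite lt0n; apply/eqP => a0; move: aS; rewrite a0 expnS -mulnA => /esym/eqP.
  by rewrite muln_eq1.
have n1 : 1 < p1 ^ a by rewrite -(expn0 p1) ltn_exp2l // prime_gt1.
apply/perfect_iff => //; split; first exact: K2.
rewrite /EE /cc primesX // primes_prime // big_seq1 /= pfactorK // !mul1n aS.
by rewrite expnS -mulnA mulnC.
Qed.

Lemma mod_e M x : 1 < M -> x = 1 %[mod M] -> (M * ((x - 1) %/ M)).+1 = x.
Proof.
move=> M1 h; have M0 : 0 < M by apply: ltnW.
move: h; rewrite (modn_small M1) => h.
have Ex := divn_eq x M; rewrite h in Ex.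
rewrite {1}Ex addnK mulnK //. by rewrite {2}Ex mulnC addn1.
Qed.

Theorem part2 (k m : nat) (hk : odd k) (hm : 0 < m) :
   1 < k ->
   forall d : 'I_(m.+2) -> nat,
     (forall i, 1 < d i) ->
     \prod_(i < m.+2) d i = k ->
     (forall i, d i = 1 %[mod 2 ^ m.+1]) ->
     forall p : 'I_(m.+2) -> nat,
       (forall i, prime (p i)) -> injective p ->
       KT0Tstar_perfect (2 ^ m * k)
         (\prod_(i < m.+2) p i ^ ((d i - 1) %/ 2 ^ m.+1)).
Proof.
move=> k1 d d1 dk dm p pp pinj.
have M1 : 1 < 2 ^ m.+1 by rewrite -{1}(expn0 2) ltn_exp2l.
have de : forall i, (2 ^ m.+1 * ((d i - 1) %/ 2 ^ m.+1)).+1 = d i.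
  by move=> i; apply: mod_e.
have e0 : forall i, 0 < (d i - 1) %/ 2 ^ m.+1.
  move=> i; rewrite lt0n; apply/eqP => h; have := de i; rewrite h muln0 => h1.
  by move: (d1 i); rewrite -h1.
have ur := index_enum_uniq 'I_(m.+2).
have P := gen_primes ur pinj pp e0.
have n1 : 1 < \prod_(i < m.+2) p i ^ ((d i - 1) %/ 2 ^ m.+1).
  have n0 := gen_n0 (index_enum 'I_(m.+2)) (fun i => (d i - 1) %/ 2 ^ m.+1) pp.
  rewrite ltn_neqAle n0 andbT; apply/eqP => h.
  move: (perm_size P); rewrite -h => hs; have := size_map p (index_enum 'I_(m.+2)); rewrite -hs size_ie; done.
apply/perfect_iff => //; split; first exact: K2.
rewrite (gen_EE ur pinj pp e0) size_ie /=.
rewrite (eq_bigr _ (fun i _ => de i)) dk.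
by rewrite expnS -mulnA mulnC.
Qed.

Theorem part3 (k m : nat) (hk : odd k) (hm : 0 < m) n : 1 < n ->
  KT0Tstar_perfect (2 ^ m * k) n ->
     (exists p1 : nat, prime p1 /\ n = p1 ^ (2 ^ m.+1 * k - 1))
     \/
     (exists (d : 'I_(m.+2) -> nat) (p : 'I_(m.+2) -> nat),
        (forall i, 1 < d i) /\
        \prod_(i < m.+2) d i = k /\
        (forall i, d i = 1 %[mod 2 ^ m.+1]) /\
        (forall i, prime (p i)) /\ injective p /\
        n = \prod_(i < m.+2) p i ^ ((d i - 1) %/ 2 ^ m.+1)).
Proof.
move=> n1 /(perfect_iff _ n1) [_ E].
have n0 : 0 < n by apply: ltnW.
have k0 : 0 < k by move: hk; case: (k).
have E' : EE n = 2 ^ m.+1 * k by rewrite E expnS mulnC mulnA.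
have s0 := primes_size_gt0 n1.
have pr : forall q, q \in primes n -> prime q by move=> q; rewrite mem_primes => /andP[].
case: (ltngtP (size (primes n)) 1) => hs.
- by move: s0; rewrite ltnNge -ltnS hs.
- right.
  set P := \prod_(q <- primes n) (cc n * logn q n).+1.
  have oP : odd P.
    apply: odd_prod => q; rewrite /= oddM /cc.
    by case: (size (primes n)) hs => [|[|j]] //= _; rewrite expnS oddM.
  have hsz : (size (primes n)).-1 = m.+1.
    by move: (congr1 (logn 2) E'); rewrite /EE /cc -/P !logn2_odd.
  have Pk : P = k.
    by apply/eqP; rewrite -(eqn_pmul2l (expn_gt0 2 m.+1)); move: E'; rewrite /EE -/P /cc hsz => ->.
  have hs2 : size (primes n) = m.+2 by rewrite -hsz prednK.
  have ccE : cc n = 2 ^ m.+1 by rewrite /cc hsz.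
  set p := fun i : 'I_(m.+2) => nth 0 (primes n) i.
  have pin : forall i : 'I_(m.+2), p i \in primes n by move=> i; rewrite mem_nth // hs2.
  exists (fun i => (2 ^ m.+1 * logn (p i) n).+1), p.
  have eK : forall i : 'I_(m.+2),
     ((2 ^ m.+1 * logn (p i) n).+1 - 1) %/ 2 ^ m.+1 = logn (p i) n.
    by move=> i; rewrite subn1 /= mulKn // expn_gt0.
  split.
    by move=> i; rewrite ltnS muln_gt0 expn_gt0 logn_gt0 pin.
  split.
    rewrite -Pk /P (big_nth 0) hs2 big_mkord; apply: eq_bigr => i _.
    by rewrite ccE.
  split.
    by move=> i; rewrite -addn1 mulnC modnMDl.
  split; first by move=> i; apply: pr.
  split.
    move=> i j /eqP; rewrite /p nth_uniq ?hs2 ?primes_uniq // => /eqP h.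
    exact: val_inj.
  rewrite (eq_bigr _ (fun i _ => congr1 (expn (p i)) (eK i))).
  by rewrite {1}(prod_primes n0) (big_nth 0) hs2 big_mkord.
- left.
  have [q Eq] : exists q, primes n = [:: q].
    by move: hs; case: (primes n) => [|q [|]] // _; exists q.
  have pq : prime q by apply: pr; rewrite Eq mem_head.
  exists q; split => //.
  move: E'; rewrite /EE /cc Eq big_seq1 /= !mul1n => <-.
  by rewrite subn1 /= {1}(prod_primes n0) Eq big_seq1.
Qed.

Theorem mainTheorem12 (k m : nat) (hk : odd k) (hm : 0 < m) :
  (* (1) *)
  (forall p1 : nat, prime p1 ->
     KT0Tstar_perfect (2 ^ m * k) (p1 ^ (2 ^ m.+1 * k - 1)))
  /\
  (* (2) *)
  (1 < k ->
   forall d : 'I_(m.+2) -> nat,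
     (forall i, 1 < d i) ->
     \prod_(i < m.+2) d i = k ->
     (forall i, d i = 1 %[mod 2 ^ m.+1]) ->
     forall p : 'I_(m.+2) -> nat,
       (forall i, prime (p i)) -> injective p ->
       KT0Tstar_perfect (2 ^ m * k)
         (\prod_(i < m.+2) p i ^ ((d i - 1) %/ 2 ^ m.+1)))
  /\
  (* (3) *)
  (forall n : nat, 1 < n -> KT0Tstar_perfect (2 ^ m * k) n ->
     (exists p1 : nat, prime p1 /\ n = p1 ^ (2 ^ m.+1 * k - 1))
     \/
     (exists (d : 'I_(m.+2) -> nat) (p : 'I_(m.+2) -> nat),
        (forall i, 1 < d i) /\
        \prod_(i < m.+2) d i = k /\
        (forall i, d i = 1 %[mod 2 ^ m.+1]) /\
        (forall i, prime (p i)) /\ injective p /\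
        n = \prod_(i < m.+2) p i ^ ((d i - 1) %/ 2 ^ m.+1))).
Proof.
split; first exact: part1.
split; first exact: part2.
exact: part3.
Qed.
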